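(* Let $(V_1,\dots,V_n)$ be an $n$-tuple of doubly non-commuting isometries on $H$ such that $V_1,\dots,V_n$ are all pure isometries and $\bigcap_{i=1}^n\ker V_i^*$ is finite-dimensional. Let $T\in B(H)$ be such that, for each $i=1,\dots,n$, $TV_i=\tau_iV_iT$ for some $\tau_i\in\mathbb T$ and $T(\ker V_i^* )\subseteq\ker V_i^*$. If the restriction of $T$ to $\bigcap_{i=1}^n\ker V_i^*$ has trivial kernel, then $T(H)=H$.
   Context: Fix $n\ge1$ and $z_{ij}\in\mathbb T$ ($i\ne j$) with $z_{ji}=\overline{z_{ij}}$; $(V_1,\dots,V_n)$ is doubly non-commuting if the $V_i$ are isometries with $V_i^*V_j=\overline{z_{ij}}V_jV_i^*$ for $i\ne j$. An isometry $S$ on $H$ is a pure isometry if $\{0\}$ is the only $S$-invariant subspace of $H$ on which $S$ is unitary. *)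

(* Defs.v *)
From HB Require Import structures.
From mathcomp Require Import all_boot all_order all_algebra.
From mathcomp Require Import reals.
From mathcomp Require Export complex.
Set Implicit Arguments. Unset Strict Implicit. Unset Printing Implicit Defensive.
Import Order.TTheory GRing.Theory Num.Theory.
Local Open Scope ring_scope.

Section Hilbert.
Variable R : realType.
Local Notation C := (R[i]).
Variable H : lmodType C.
Variable ip : H -> H -> C.

Definition inner_product : Prop :=
  [/\ forall (a : C) (x y z : H), ip (a *: x + y) z = a * ip x z + ip y z,
      forall x y : H, ip y x = (ip x y)^*,
      forall x : H, 0 <= ip x x &
      forall x : H, ip x x = 0 -> x = 0].

Definition hnorm (x : H) : C := sqrtC (ip x x).

Definition cauchy_seq (u : nat -> H) : Prop :=
  forall e : C, 0 < e -> exists N : nat,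
    forall m k : nat, (N <= m)%N -> (N <= k)%N -> hnorm (u m - u k) < e.

Definition converges_to (u : nat -> H) (l : H) : Prop :=
  forall e : C, 0 < e -> exists N : nat,
    forall m : nat, (N <= m)%N -> hnorm (u m - l) < e.

Definition hilbert_space : Prop :=
  inner_product /\
  forall u : nat -> H, cauchy_seq u -> exists l : H, converges_to u l.

Definition bounded (T : H -> H) : Prop :=
  exists M : C, forall x : H, hnorm (T x) <= M * hnorm x.

Definition is_adjoint (B A : H -> H) : Prop :=
  forall x y : H, ip (B x) y = ip x (A y).

Definition isometry (V : H -> H) : Prop :=
  forall x : H, hnorm (V x) = hnorm x.

Definition closed_subspace (M : H -> Prop) : Prop :=
  [/\ M 0,
      forall (a : C) (x y : H), M x -> M y -> M (a *: x + y) &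
      forall (u : nat -> H) (l : H), (forall k, M (u k)) -> converges_to u l -> M l].

(* S is a pure isometry: {0} is the only S-invariant (closed) subspace on
   which S is unitary (i.e. S restricted to M maps M onto M). *)
Definition pure_isometry (S : H -> H) : Prop :=
  isometry S /\
  forall M : H -> Prop, closed_subspace M ->
    (forall x, M x -> M (S x)) ->
    (forall y, M y -> exists2 x, M x & S x = y) ->
    forall x, M x -> x = 0.

Definition finite_dimensional (W : H -> Prop) : Prop :=
  exists s : seq H, forall x : H, W x ->
    exists c : nat -> C, x = \sum_(k < size s) c k *: s`_k.

Definition doubly_noncommuting (n : nat) (z : 'I_n -> 'I_n -> C)
    (V Vs : 'I_n -> H -> H) : Prop :=
  [/\ forall i j, i != j -> `|z i j| = 1,
      forall i j, i != j -> z j i = (z i j)^*,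
      forall i, isometry (V i),
      forall i, is_adjoint (V i) (Vs i) &
      forall i j, i != j -> forall x, Vs i (V j x) = (z i j)^* *: V j (Vs i x)].

End Hilbert.

(* Main.v *)
Require Import Defs.
From HB Require Import structures.
From mathcomp Require Import all_boot all_order all_algebra.
From mathcomp Require Import boolp classical_sets reals complex.
From mathcomp Require Import ring lra.
Import Order.TTheory GRing.Theory Num.Theory.
Local Open Scope ring_scope.
Set Implicit Arguments. Unset Strict Implicit. Unset Printing Implicit Defensive.

Module P1.

Section IP.
Variable R : realType.
Local Notation C := (R[i]).
Local Notation "x %:C" := (real_complex R x).
Variable H : lmodType C.
Variable ip : H -> H -> C.
Hypothesis ipP : inner_product ip.

Lemma ipDZl a x y z : ip (a *: x + y) z = a * ip x z + ip y z.
Proof. by case: ipP. Qed.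
Lemma ipC x y : ip y x = (ip x y)^*.
Proof. by case: ipP. Qed.
Lemma ip_ge0 x : 0 <= ip x x.
Proof. by case: ipP. Qed.
Lemma ip_eq0 x : ip x x = 0 -> x = 0.
Proof. by case: ipP => _ _ _; apply. Qed.
Lemma ipDl x y z : ip (x + y) z = ip x z + ip y z.
Proof. by rewrite -{1}(scale1r x) ipDZl mul1r. Qed.
Lemma ip0l z : ip 0 z = 0.
Proof. have h := ipDl 0 0 z; rewrite addr0 in h.
by apply: (addrI (ip 0 z)); rewrite addr0 -h. Qed.
Lemma ipZl a x z : ip (a *: x) z = a * ip x z.
Proof. by rewrite -(addr0 (a *: x)) ipDZl ip0l addr0. Qed.
Lemma ipNl x z : ip (- x) z = - ip x z.
Proof. by rewrite -scaleN1r ipZl mulN1r. Qed.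
Lemma ipBl x y z : ip (x - y) z = ip x z - ip y z.
Proof. by rewrite ipDl ipNl. Qed.
Lemma ipDr z x y : ip z (x + y) = ip z x + ip z y.
Proof. by rewrite ipC ipDl rmorphD /= -!ipC. Qed.
Lemma ipZr z a x : ip z (a *: x) = a^* * ip z x.
Proof. by rewrite ipC ipZl rmorphM /= -ipC. Qed.
Lemma ip0r z : ip z 0 = 0.
Proof. by rewrite ipC ip0l rmorph0. Qed.
Lemma ipNr z x : ip z (- x) = - ip z x.
Proof. by rewrite ipC ipNl rmorphN /= -ipC. Qed.
Lemma ipBr z x y : ip z (x - y) = ip z x - ip z y.
Proof. by rewrite ipDr ipNr. Qed.
Lemma ipsuml (I : Type) (r : seq I) (P : pred I) (F : I -> H) z :
  ip (\sum_(i <- r | P i) F i) z = \sum_(i <- r | P i) ip (F i) z.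
Proof.
apply: (big_rec2 (fun a b => ip a z = b)); first exact: ip0l.
by move=> i a b _ <-; rewrite ipDl.
Qed.
Lemma ipsumr (I : Type) (r : seq I) (P : pred I) (F : I -> H) z :
  ip z (\sum_(i <- r | P i) F i) = \sum_(i <- r | P i) ip z (F i).
Proof.
apply: (big_rec2 (fun a b => ip z a = b)); first exact: ip0r.
by move=> i a b _ <-; rewrite ipDr.
Qed.

Definition nr x := complex.Re (ip x x).

Lemma ipxx x : ip x x = (nr x)%:C.
Proof. by rewrite /nr RRe_real // ger0_real // ip_ge0. Qed.
Lemma nr_ge0 x : 0 <= nr x.
Proof. by rewrite -ler0c -ipxx ip_ge0. Qed.
Lemma nr_eq0 x : nr x = 0 -> x = 0.
Proof. by move=> h; apply: ip_eq0; rewrite ipxx h. Qed.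
Lemma nr0 : nr 0 = 0.
Proof. by rewrite /nr ip0l. Qed.

Lemma hnormE x : hnorm ip x = (Num.sqrt (nr x))%:C.
Proof.
rewrite /hnorm ipxx -{1}(sqr_sqrtr (nr_ge0 x)) rmorphXn sqrCK //.
by rewrite ler0c sqrtr_ge0.
Qed.

Lemma nr_par x y : nr (x + y) + nr (x - y) = 2 * nr x + 2 * nr y.
Proof.
apply: (@complexI R); rewrite !rmorphD !rmorphM /= -!ipxx.
rewrite !(ipDl, ipBl, ipDr, ipBr, ipNl, ipNr).
have -> : (2 : R)%:C = 2 by rewrite rmorph_nat.
ring.
Qed.

Lemma nr_tri x y : nr (x + y) <= 2 * nr x + 2 * nr y.
Proof. by rewrite -nr_par lerDl nr_ge0. Qed.


Lemma lt_hnorm d (r : R) : 0 < r -> (hnorm ip d < r%:C) = (nr d < r ^+ 2).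
Proof.
move=> r0; rewrite hnormE ltcR -{1}(ger0_norm (ltW r0)) -sqrtr_sqr ltr_sqrt //.
by rewrite exprn_gt0.
Qed.

Lemma posC (e : C) : 0 < e -> e = (complex.Re e)%:C /\ 0 < complex.Re e.
Proof.
move=> he; split; first by rewrite RRe_real // gtr0_real.
by move: he; rewrite ltcE => /andP[_].
Qed.

Definition conv (u : nat -> H) l := forall e : R, 0 < e ->
  exists N, forall m, (N <= m)%N -> nr (u m - l) < e.
Definition cauchyR (u : nat -> H) := forall e : R, 0 < e ->
  exists N, forall m k, (N <= m)%N -> (N <= k)%N -> nr (u m - u k) < e.

Lemma conv_toP u l : converges_to ip u l <-> conv u l.
Proof.
split.
  move=> h e he.
  have h0 : 0 < (Num.sqrt e)%:C by rewrite ltcR sqrtr_gt0.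
  have [N hN] := h _ h0.
  exists N => m /hN; rewrite lt_hnorm ?sqrtr_gt0 // sqr_sqrtr //; exact: ltW.
move=> h e he; have [-> e0] := posC he.
have [N hN] := h _ (exprn_gt0 2 e0).
by exists N => m /hN; rewrite lt_hnorm.
Qed.

Lemma cauchyP u : cauchyR u -> cauchy_seq ip u.
Proof.
move=> h e he; have [-> e0] := posC he.
have [N hN] := h _ (exprn_gt0 2 e0).
by exists N => m k hm hk; rewrite lt_hnorm // hN.
Qed.

Lemma completeP : hilbert_space ip -> forall u, cauchyR u -> exists l, conv u l.
Proof.
case=> _ hc u /cauchyP /hc [l hl]; exists l; exact/conv_toP.
Qed.

Lemma small_eq0 d : (forall e : R, 0 < e -> nr d < e) -> d = 0.
Proof.
move=> h; apply: nr_eq0; apply/eqP; rewrite eq_le nr_ge0 andbT.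
apply/negPn/negP; rewrite -ltNge => hd.
by have := h _ hd; rewrite ltxx.
Qed.

Lemma conv_uniq u a b : conv u a -> conv u b -> a = b.
Proof.
move=> ha hb; apply/eqP; rewrite -subr_eq0; apply/eqP; apply: small_eq0 => e e0.
have e4 : 0 < e / 4 by rewrite divr_gt0.
have [N1 h1] := ha _ e4; have [N2 h2] := hb _ e4.
have := h1 (maxn N1 N2) (leq_maxl _ _); have := h2 (maxn N1 N2) (leq_maxr _ _).
set w := u _ => hb' ha'.
have -> : a - b = (w - b) + - (w - a) by rewrite opprB [RHS]addrC addrA subrK.
apply: (le_lt_trans (nr_tri _ _)).
have -> : nr (- (w - a)) = nr (w - a) by rewrite /nr ipNl ipNr opprK.
lra.
Qed.

Lemma conv_ext u v l N0 : (forall m, (N0 <= m)%N -> u m = v m) -> conv u l -> conv v l.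
Proof.
move=> huv h e /h [N hN]; exists (maxn N N0) => m hm.
rewrite -huv; last by apply: leq_trans hm; apply: leq_maxr.
by apply: hN; apply: leq_trans hm; apply: leq_maxl.
Qed.

Lemma conv_cst l : conv (fun _ => l) l.
Proof. by move=> e e0; exists 0%N => m _; rewrite subrr nr0. Qed.

Lemma conv_map (F : H -> H) (B : R) u l :
  (forall a b, F (a - b) = F a - F b) -> 0 <= B ->
  (forall x, nr (F x) <= B * nr x) -> conv u l -> conv (fun m => F (u m)) (F l).
Proof.
move=> FB B0 hB h e e0.
have eB : 0 < e / (B + 1) by rewrite divr_gt0 // ltr_wpDl.
have [N hN] := h _ eB; exists N => m /hN hm.
rewrite -FB; apply: (le_lt_trans (hB _)).
have B1 : 0 < B + 1 by rewrite ltr_wpDl.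
have : B * nr (u m - l) <= (B + 1) * nr (u m - l) by rewrite ler_wpM2r ?nr_ge0 // lerDl.
move=> h1; apply: (le_lt_trans h1).
by rewrite mulrC -ltr_pdivlMr.
Qed.

End IP.

End P1.
Import P1.

Module P2.

Lemma mono_cauchy (R : realType) (b : nat -> R) :
  (forall k, 0 <= b k) -> (forall k, b k.+1 <= b k) ->
  forall e, 0 < e -> exists N, forall K M, (N <= K)%N -> (K <= M)%N -> b K - b M < e.
Proof.
move=> b0 bd e e0.
have bmono : forall K M, (K <= M)%N -> b M <= b K.
  move=> K M /subnKC <-; elim: (M - K)%N => [|d IH]; first by rewrite addn0.
  by rewrite addnS (le_trans (bd _)).
pose E := fun x : R => exists k, x = - b k.
have hs : has_sup E.
  split; first by exists (- b 0%N), 0%N.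
  exists 0 => x [k ->]; by rewrite oppr_le0.
have [x [N ->] hN] := sup_adherent e0 hs.
exists N => K M hK hKM.
have h1 := sup_upper_bound hs (ex_intro _ M erefl).
have h2 := bmono _ _ hK.
simpl in h1; lra.
Qed.

Section Iso.
Variable R : realType.
Local Notation C := (R[i]).
Local Notation "x %:C" := (real_complex R x).
Variable H : lmodType C.
Variable ip : H -> H -> C.
Hypothesis ipP : inner_product ip.
Local Notation nr := (nr ip).

Lemma ip_expand u v c : ip (u + c *: v) (u + c *: v) =
  ip u u + c^* * ip u v + c * ip v u + c * c^* * ip v v.
Proof.
rewrite !(ipDl ipP, ipDr ipP, ipZl ipP, ipZr ipP). ring.
Qed.

Lemma nrN x : nr (- x) = nr x.
Proof. by rewrite /P1.nr (ipNl ipP) (ipNr ipP) opprK. Qed.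

Lemma nrB x y : nr (x - y) = nr (y - x).
Proof. by rewrite -nrN opprB. Qed.

Lemma orth_sum (w : nat -> H) N M :
  (forall j k, j <> k -> ip (w j) (w k) = 0) -> (N <= M)%N ->
  nr (\sum_(N <= k < M) w k) = \sum_(N <= k < M) nr (w k).
Proof.
move=> horth; elim: M => [|M IH].
  by rewrite leqn0 => /eqP ->; rewrite !big_geq // (nr0 ipP).
rewrite leq_eqVlt => /orP[/eqP -> | hNM]; first by rewrite !big_geq // (nr0 ipP).
rewrite !big_nat_recr //=; rewrite -IH //.
apply: (@complexI R); rewrite rmorphD /= -!(ipxx ipP) !(ipDl ipP, ipDr ipP).
have z1 : ip (\sum_(N <= k < M) w k) (w M) = 0.
  rewrite (ipsuml ipP) big1_seq // => k; rewrite mem_index_iota => /andP[_ hk].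
  by apply: horth => e; move: hk; rewrite e ltnn ?andbF.
have z2 : ip (w M) (\sum_(N <= k < M) w k) = 0.
  rewrite (ipsumr ipP) big1_seq // => k; rewrite mem_index_iota => /andP[_ hk].
  by apply: horth => e; move: hk; rewrite e ltnn ?andbF.
by rewrite z1 z2 addr0 add0r.
Qed.

Variables V Vs : {linear H -> H}.
Hypothesis hiso : Defs.isometry ip V.
Hypothesis hadj : is_adjoint ip V Vs.

Lemma nrV x : nr (V x) = nr x.
Proof.
have := hiso x; rewrite !(hnormE ipP) => /complexI h.
by rewrite -(sqr_sqrtr (nr_ge0 ipP (V x))) h sqr_sqrtr // nr_ge0.
Qed.

Lemma ipVV x : ip (V x) (V x) = ip x x.
Proof. by rewrite !(ipxx ipP) nrV. Qed.

Lemma ipV x y : ip (V x) (V y) = ip x y.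
Proof.
have h c : ip (V x + c *: V y) (V x + c *: V y) = ip (x + c *: y) (x + c *: y).
  by rewrite -linearZ -linearD ipVV.
have h1 := h 1; have h2 := h 'i.
rewrite !ip_expand !ipVV conjC1 conjCi in h1 h2.
move/eqP: h1; rewrite -subr_eq0 => /eqP h1.
move/eqP: h2; rewrite -subr_eq0 => /eqP h2.
move: h1 h2; set A := ip (V x) (V y); set B := ip (V y) (V x).
set a := ip x y; set b := ip y x; set xx := ip x x; set yy := ip y y => h1 h2.
have e : 2 * (A - a) = (xx + 1 * A + 1 * B + 1 * 1 * yy - (xx + 1 * a + 1 * b + 1 * 1 * yy))
  + 'i * (xx + - 'i * A + 'i * B + 'i * - 'i * yy - (xx + - 'i * a + 'i * b + 'i * - 'i * yy))
  + ('i ^+ 2 + 1) * ((A - a) - (B - b)) by ring.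
rewrite h1 h2 sqrCi addNr !mul0r mulr0 !addr0 in e.
apply/eqP; rewrite -subr_eq0; apply/eqP.
by move/eqP: e; rewrite mulf_eq0 pnatr_eq0 /= => /eqP.
Qed.

Lemma VsV x : Vs (V x) = x.
Proof.
apply/eqP; rewrite -subr_eq0; apply/eqP; apply: (ip_eq0 ipP).
by rewrite (ipBr ipP) -hadj ipV subrr.
Qed.

Lemma ipVs a b : ip (V a) b = ip a (Vs b).
Proof. exact: hadj. Qed.

Lemma nr_VVs y : nr (y - V (Vs y)) = nr y - nr (Vs y).
Proof.
apply: (@complexI R); rewrite rmorphB /= -!(ipxx ipP).
rewrite !(ipBl ipP, ipBr ipP) ipV ipVs.
rewrite [ip y (V _)](ipC ipP) ipVs (conj_Creal (ger0_real (ip_ge0 ipP _))).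
ring.
Qed.

Lemma nrVs_le y : nr (Vs y) <= nr y.
Proof. by rewrite -subr_ge0 -nr_VVs nr_ge0. Qed.

Definition Vn k := iter k V.
Definition Vsn k := iter k Vs.

Lemma iter_linB (f : {linear H -> H}) k a b : iter k f (a - b) = iter k f a - iter k f b.
Proof. by elim: k => //= k ->; rewrite linearB. Qed.
Lemma iter_linZD (f : {linear H -> H}) k c a b :
  iter k f (c *: a + b) = c *: iter k f a + iter k f b.
Proof. by elim: k => //= k ->; rewrite linearD linearZ. Qed.
Lemma iter_lin0 (f : {linear H -> H}) k : iter k f 0 = 0.
Proof. by elim: k => //= k ->; rewrite linear0. Qed.

Lemma ipVn k a b : ip (Vn k a) (Vn k b) = ip a b.
Proof. by elim: k => //= k IH; rewrite ipV. Qed.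
Lemma nrVn k a : nr (Vn k a) = nr a.
Proof. by rewrite /P1.nr ipVn. Qed.
Lemma ipVsn k a b : ip (Vn k a) b = ip a (Vsn k b).
Proof. rewrite /Vn /Vsn; elim: k a b => // k IH a b. by rewrite [in LHS]iterS ipVs IH -iterSr. Qed.

Lemma VsnVn j k b : (j <= k)%N -> Vsn j (Vn k b) = Vn (k - j) b.
Proof.
rewrite /Vn /Vsn; elim: j k b => [|j IH] [|k] b //=.
by rewrite ltnS => hjk; rewrite -iterS iterSr VsV IH // subSS.
Qed.

Lemma ip_kerVs a w : Vs a = 0 -> ip a (V w) = 0.
Proof. by move=> ha; rewrite (ipC ipP) ipVs ha (ip0r ipP) conjC0. Qed.

Lemma orth_Vn j k a b : Vs a = 0 -> Vs b = 0 -> j <> k -> ip (Vn j a) (Vn k b) = 0.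
Proof.
have key : forall j k a b, Vs a = 0 -> (j < k)%N -> ip (Vn j a) (Vn k b) = 0.
  move=> j' k' a' b' ha hjk; rewrite ipVsn VsnVn ?(ltnW hjk) //.
  rewrite -(subnSK hjk) /Vn iterS; exact: ip_kerVs.
move=> ha hb /eqP; rewrite neq_ltn => /orP[h|h]; first exact: key.
by rewrite (ipC ipP) key // conjC0.
Qed.

End Iso.

End P2.
Import P2.

Module P3.

Section Pure.
Variable R : realType.
Local Notation C := (R[i]).
Local Notation "x %:C" := (real_complex R x).
Variable H : lmodType C.
Variable ip : H -> H -> C.
Hypothesis ipP : inner_product ip.
Local Notation nr := (nr ip).

Lemma fix_closed (F : H -> H) (B : R) u l :
  (forall a b, F (a - b) = F a - F b) -> 0 <= B ->
  (forall x, nr (F x) <= B * nr x) -> (forall k, F (u k) = u k) -> conv ip u l -> F l = l.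
Proof.
move=> FB B0 hB hF hl.
have h1 := conv_map ipP FB B0 hB hl.
have h2 : conv ip u (F l) by apply: (conv_ext (N0 := 0%N) _ h1) => m _; rewrite hF.
exact: (conv_uniq ipP h2 hl).
Qed.

Variables V Vs : {linear H -> H}.
Hypothesis hiso : Defs.isometry ip V.
Hypothesis hadj : is_adjoint ip V Vs.

Local Notation Vn := (Vn V).
Local Notation Vsn := (Vsn Vs).

Definition Q k y := Vn k (Vsn k y).

Lemma QB k a b : Q k (a - b) = Q k a - Q k b.
Proof. by rewrite /Q /P2.Vsn iter_linB /P2.Vn iter_linB. Qed.
Lemma QZD k c a b : Q k (c *: a + b) = c *: Q k a + Q k b.
Proof. by rewrite /Q /P2.Vsn iter_linZD /P2.Vn iter_linZD. Qed.
Lemma Q0 k : Q k 0 = 0.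
Proof. by rewrite /Q /P2.Vsn iter_lin0 /P2.Vn iter_lin0. Qed.

Lemma VsnS k x : Vsn k.+1 x = Vs (Vsn k x).
Proof. by rewrite /P2.Vsn iterS. Qed.

Lemma VsnSr k x : Vsn k.+1 x = Vsn k (Vs x).
Proof. by rewrite /P2.Vsn iterSr. Qed.
Lemma VnS k x : Vn k.+1 x = V (Vn k x).
Proof. by rewrite /P2.Vn iterS. Qed.
Lemma VnSr k x : Vn k.+1 x = Vn k (V x).
Proof. by rewrite /P2.Vn iterSr. Qed.

Lemma nrVsn_le k x : nr (Vsn k x) <= nr x.
Proof.
elim: k => [|k IH]; first by [].
rewrite VsnS.
exact: le_trans (nrVs_le ipP hiso hadj _) IH.
Qed.

Lemma nrQ k x : nr (Q k x) <= 1 * nr x.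
Proof. by rewrite mul1r /Q (nrVn ipP hiso) nrVsn_le. Qed.

Lemma QQ N M y : (N <= M)%N -> Q N (Q M y) = Q M y.
Proof.
move=> hNM; rewrite /Q (VsnVn ipP hiso hadj) // /P2.Vn -iterD subnKC //.
Qed.

Section Y.
Variable y : H.
Definition uu k := Vsn k y - V (Vsn k.+1 y).
Definition bb k := nr (Vsn k y).

Lemma Q_diff k : Q k y - Q k.+1 y = Vn k (uu k).
Proof. by rewrite /Q /uu /P2.Vn iter_linB iterSr. Qed.

Lemma Vs_uu k : Vs (uu k) = 0.
Proof. by rewrite /uu VsnS linearB (VsV ipP hiso hadj) subrr. Qed.

Lemma nr_uu k : nr (uu k) = bb k - bb k.+1.
Proof. by rewrite /uu VsnS (nr_VVs ipP hiso hadj). Qed.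

Lemma bb_ge0 k : 0 <= bb k.
Proof. exact: nr_ge0. Qed.

Lemma bbS k : bb k.+1 <= bb k.
Proof. by rewrite -subr_ge0 -nr_uu nr_ge0. Qed.

Lemma tele N M : (N <= M)%N -> \sum_(N <= k < M) Vn k (uu k) = Q N y - Q M y.
Proof.
move=> hNM.
have -> : \sum_(N <= k < M) Vn k (uu k) = - \sum_(N <= k < M) (Q k.+1 y - Q k y).
  by rewrite -sumrN; apply: eq_bigr => k _; rewrite opprB Q_diff.
by rewrite telescope_sumr // opprB.
Qed.

Lemma nr_sum_uu N M : (N <= M)%N -> nr (\sum_(N <= k < M) Vn k (uu k)) = bb N - bb M.
Proof.
move=> hNM; rewrite (orth_sum ipP); last by [].
  have -> : \sum_(N <= k < M) nr (Vn k (uu k)) = - \sum_(N <= k < M) (bb k.+1 - bb k).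
    by rewrite -sumrN; apply: eq_bigr => k _; rewrite opprB (nrVn ipP hiso) nr_uu.
  by rewrite telescope_sumr // opprB.
by move=> j k; apply: (orth_Vn ipP hiso hadj); apply: Vs_uu.
Qed.

Lemma nrQdiff N M : (N <= M)%N -> nr (Q N y - Q M y) = bb N - bb M.
Proof. by move=> h; rewrite -tele // nr_sum_uu. Qed.

Lemma Q_cauchy : cauchyR ip (fun k => Q k y).
Proof.
move=> e e0; have [N hN] := mono_cauchy bb_ge0 bbS e0.
exists N => m k hm hk; case: (leqP m k) => hmk.
  by rewrite nrQdiff // hN.
by rewrite (nrB ipP) nrQdiff ?(ltnW hmk) // hN // ltnW.
Qed.

End Y.

Hypothesis hH : hilbert_space ip.
Hypothesis hpure : pure_isometry ip V.

Lemma Q_to0 y : conv ip (fun k => Q k y) 0.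
Proof.
have [l hl] := completeP ipP hH (Q_cauchy y).
suff e : l = 0 by rewrite -e.
have lfix : forall N, Q N l = l.
  move=> N.
  have h1 := conv_map ipP (QB N) ler01 (nrQ N) hl.
  have h2 : conv ip (fun k => Q k y) (Q N l).
    by apply: (conv_ext (N0 := N) _ h1) => m hm; rewrite QQ.
  exact: (conv_uniq ipP h2 hl).
case: hpure => _ hp; apply: (hp (fun x => forall N, Q N x = x)) => //.
- split.
  + by move=> N; rewrite Q0.
  + by move=> c a b ha hb N; rewrite QZD ha hb.
  + move=> u l' hu /(conv_toP ipP) hl' N.
    exact: (fix_closed (QB N) ler01 (nrQ N) (fun k => hu k N) hl').
- move=> x hx [|N]; first by [].
  by rewrite /Q VsnSr (VsV ipP hiso hadj) VnS; have := hx N; rewrite /Q => ->.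
- move=> x hx; exists (Vs x).
    move=> N; have := hx N.+1; rewrite /Q VnS VsnSr => /(congr1 Vs).
    by rewrite (VsV ipP hiso hadj) -VsnSr.
  by have := hx 1%N.
Qed.


End Pure.

End P3.
Import P3.

Module P4.

Section Step.
Variable R : realType.
Local Notation C := (R[i]).
Local Notation "x %:C" := (real_complex R x).
Variable H : lmodType C.
Variable ip : H -> H -> C.
Hypothesis ipP : inner_product ip.
Hypothesis hH : hilbert_space ip.
Local Notation nr := (nr ip).
Variables V Vs T : {linear H -> H}.
Hypothesis hiso : Defs.isometry ip V.
Hypothesis hadj : is_adjoint ip V Vs.
Hypothesis hpure : pure_isometry ip V.
Variable B : R.
Hypothesis B0 : 0 <= B.
Hypothesis hB : forall x, nr (T x) <= B * nr x.
Variable tau : C.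
Hypothesis htau : tau * tau^* = 1.
Hypothesis hTV : forall x, T (V x) = tau *: V (T x).
Variable S : H -> Prop.
Hypothesis S0 : S 0.
Hypothesis SZD : forall c a b, S a -> S b -> S (c *: a + b).
Hypothesis Scl : forall u l, (forall k, S (u k)) -> conv ip u l -> S l.
Hypothesis SV : forall x, S x -> S (V x).
Hypothesis SVs : forall x, S x -> S (Vs x).

Local Notation Vn := (Vn V).
Local Notation Vsn := (Vsn Vs).

Lemma SD a b : S a -> S b -> S (a + b).
Proof. by move=> ha hb; rewrite -(scale1r a); apply: SZD. Qed.
Lemma SZ c a : S a -> S (c *: a).
Proof. by move=> ha; rewrite -(addr0 (c *: a)); apply: SZD. Qed.
Lemma SB a b : S a -> S b -> S (a - b).
Proof. by move=> ha hb; rewrite -scaleN1r addrC; apply: SZD. Qed.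
Lemma SVn k x : S x -> S (Vn k x).
Proof. by elim: k => // k IH hx; rewrite VnS; apply: SV; apply: IH. Qed.
Lemma SVsn k x : S x -> S (Vsn k x).
Proof. by elim: k => // k IH hx; rewrite VsnS; apply: SVs; apply: IH. Qed.
Lemma Ssum (F : nat -> H) N M : (forall k, S (F k)) -> S (\sum_(N <= k < M) F k).
Proof.
move=> hF; apply: (big_rec (fun a => S a)) => // i a _ ha; exact: SD.
Qed.

Lemma TVn k x : T (Vn k x) = tau ^+ k *: Vn k (T x).
Proof.
elim: k => [|k IH]; first by rewrite expr0 scale1r.
by rewrite !VnS hTV IH linearZ /= scalerA exprS.
Qed.

Lemma unitpow k : (tau^* ^+ k) * (tau^* ^+ k)^* = 1.
Proof.
by rewrite rmorphXn /= conjCK -exprMn mulrC htau expr1n.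
Qed.

Lemma unitpow2 k : (tau^* ^+ k) * tau ^+ k = 1.
Proof. by rewrite -exprMn mulrC htau expr1n. Qed.

Variable K : R.
Hypothesis K0 : 0 <= K.
Hypothesis hK : forall u, S u -> Vs u = 0 ->
  exists x, [/\ S x, Vs x = 0, T x = u & nr x <= K * nr u].

Lemma step y : S y -> exists x, [/\ S x, T x = y & nr x <= (2 * K) * nr y].
Proof.
move=> Sy.
have Su k : S (uu V Vs y k).
  by rewrite /uu; apply: SB; [apply: SVsn | apply: SV; apply: SVsn].
have [xk hxk] := boolp.choice (fun k => hK (Su k) (Vs_uu ipP hiso hadj y k)).
pose c := tau^*.
pose w k := c ^+ k *: Vn k (xk k).
pose X N := \sum_(0 <= k < N) w k.
have Sx k : S (xk k) by case: (hxk k).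
have Vsx k : Vs (xk k) = 0 by case: (hxk k).
have Tx k : T (xk k) = uu V Vs y k by case: (hxk k).
have nx k : nr (xk k) <= K * nr (uu V Vs y k) by case: (hxk k).
have SX N : S (X N) by apply: Ssum => k; apply: SZ; apply: SVn.
have TX N : T (X N) = y - Q V Vs N y.
  rewrite /X linear_sum /=.
  have -> : y = Q V Vs 0 y by [].
  rewrite -(tele V Vs y (leq0n N)); apply: eq_bigr => k _.
  by rewrite /w linearZ /= TVn Tx scalerA unitpow2 scale1r.
have worth : forall j k, j <> k -> ip (w j) (w k) = 0.
  move=> j k hjk; rewrite /w (ipZl ipP) (ipZr ipP).
  by rewrite (orth_Vn ipP hiso hadj) // !mulr0.
have nw k : nr (w k) = nr (xk k).
  apply: (@complexI R); rewrite -!(ipxx ipP) /w (ipZl ipP) (ipZr ipP) mulrA unitpow mul1r.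
  by rewrite (ipVn ipP hiso).
have XD N M : (N <= M)%N -> X M - X N = \sum_(N <= k < M) w k.
  by move=> h; rewrite /X (big_cat_nat (leq0n N) h) /= addrAC subrr add0r.
have nXD N M : (N <= M)%N -> nr (X M - X N) <= K * (bb ip Vs y N - bb ip Vs y M).
  move=> h; rewrite XD // (orth_sum ipP) //.
  have -> : bb ip Vs y N - bb ip Vs y M = \sum_(N <= k < M) nr (uu V Vs y k).
    have -> : \sum_(N <= k < M) nr (uu V Vs y k) =
       - \sum_(N <= k < M) (bb ip Vs y k.+1 - bb ip Vs y k).
      by rewrite -sumrN; apply: eq_bigr => k _; rewrite opprB (nr_uu ipP hiso hadj).
    by rewrite telescope_sumr // opprB.
  rewrite mulr_sumr; apply: ler_sum => k _; rewrite nw; exact: nx.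
have b0 := bb_ge0 ipP Vs y; have bS := bbS ipP hiso hadj y.
have bmono : forall m k, (m <= k)%N -> bb ip Vs y k <= bb ip Vs y m.
  move=> m k /subnKC <-; elim: (k - m)%N => [|d IH]; first by rewrite addn0.
  by rewrite addnS (le_trans (bS _)).
have Xc : cauchyR ip X.
  move=> e e0.
  have K1 : 0 < K + 1 by rewrite ltr_wpDl.
  have eK : 0 < e / (K + 1) by rewrite divr_gt0.
  have [N hN] := mono_cauchy b0 bS eK.
  have key : forall m k, (N <= m)%N -> (m <= k)%N -> nr (X k - X m) < e.
    move=> m k hm hmk; apply: (le_lt_trans (nXD _ _ hmk)).
    have h1 := hN _ _ hm hmk; rewrite ltr_pdivlMr // in h1.
    have h2 := bmono _ _ hmk.
    set d := bb ip Vs y m - bb ip Vs y k in h1 *.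
    have d0 : 0 <= d by rewrite subr_ge0.
    nra.
  exists N => m k hm hk; case: (leqP m k) => hmk.
    by rewrite (nrB ipP) key.
  exact: key hk (ltnW hmk).
have [x hx] := completeP ipP hH Xc.
exists x; split.
- exact: Scl SX hx.
- have h1 := conv_map ipP (fun a b => linearB T a b) B0 hB hx.
  have h2 : conv ip (fun N => T (X N)) y.
    move=> e e0; have [N hN] := Q_to0 ipP hiso hadj hH hpure y e0.
    exists N => m hm; rewrite TX addrAC subrr add0r (nrN ipP).
    have := hN m hm; congr (_ < _); congr (nr _); exact: subr0.
  exact: (conv_uniq ipP h1 h2).
- apply/ler_addgt0Pr => e e0.
  have e4 : 0 < e / 2 by rewrite divr_gt0.
  have [N hN] := hx _ e4.
  have hXN : nr (X N) <= K * nr y.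
    have X0 : X 0%N = 0 by rewrite /X big_geq.
    have := nXD 0%N N (leq0n N); rewrite X0 subr0 => h.
    apply: (le_trans h); apply: ler_wpM2l => //.
    have -> : bb ip Vs y 0 = nr y by [].
    by rewrite lerBlDr lerDl b0.
  have := nr_tri ipP (X N) (x - X N); rewrite addrC subrK => h.
  have := hN N (leqnn N); rewrite (nrB ipP) => h'.
  lra.
Qed.

End Step.

End P4.
Import P4.

Module P5.

Section ONB.
Variable R : realType.
Local Notation C := (R[i]).
Local Notation "x %:C" := (real_complex R x).
Variable H : lmodType C.
Variable ip : H -> H -> C.
Hypothesis ipP : inner_product ip.
Local Notation nr := (nr ip).

Definition spanN (s : seq H) x :=
  exists c : nat -> C, x = \sum_(0 <= k < size s) c k *: s`_k.
Definition orthon (e : seq H) := forall j k, (j < size e)%N -> (k < size e)%N ->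
  ip e`_j e`_k = (j == k)%:R.
Definition subsp (W : H -> Prop) :=
  W 0 /\ forall c a b, W a -> W b -> W (c *: a + b).

Lemma subspD W a b : subsp W -> W a -> W b -> W (a + b).
Proof. by case=> _ h ha hb; rewrite -(scale1r a); apply: h. Qed.
Lemma subspZ W c a : subsp W -> W a -> W (c *: a).
Proof. by case=> h0 h ha; rewrite -(addr0 (c *: a)); apply: h. Qed.
Lemma subspB W a b : subsp W -> W a -> W b -> W (a - b).
Proof. by move=> hW ha hb; rewrite -scaleN1r; apply: subspD => //; apply: subspZ. Qed.
Lemma subsp_sum W (F : nat -> H) N M : subsp W ->
  (forall k, (N <= k < M)%N -> W (F k)) -> W (\sum_(N <= k < M) F k).
Proof.
move=> hW hF; rewrite big_seq_cond.
apply: (big_rec (fun a => W a)); first by case: hW.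
move=> i a; rewrite andbT mem_index_iota => hi ha; apply: subspD => //; exact: hF.
Qed.

Lemma span_sub s : subsp (spanN s).
Proof.
split.
  exists (fun _ => 0); rewrite big1 // => k _; exact: scale0r.
move=> c a b [ca ->] [cb ->]; exists (fun k => c * ca k + cb k).
rewrite scaler_sumr -big_split /=; apply: eq_bigr => k _.
by rewrite scalerDl scalerA.
Qed.

Lemma sum_delta (c : nat -> C) n j : (j < n)%N ->
  \sum_(0 <= k < n) c k * (k == j)%:R = c j.
Proof.
move=> hj; rewrite (bigD1_seq j) ?mem_index_iota ?iota_uniq //= eqxx mulr1.
by rewrite big1 ?addr0 // => k /negbTE ->; rewrite mulr0.
Qed.

Lemma orth_coef e c j : orthon e -> (j < size e)%N ->
  ip (\sum_(0 <= k < size e) c k *: e`_k) e`_j = c j.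
Proof.
move=> he hj; rewrite (ipsuml ipP) -(sum_delta c hj).
apply: eq_big_nat => k /andP[_ hk].
by rewrite (ipZl ipP) he.
Qed.

Lemma orth_expand e x : orthon e -> spanN e x ->
  x = \sum_(0 <= k < size e) ip x e`_k *: e`_k.
Proof.
move=> he [c ->]; apply: eq_big_nat => k /andP[_ hk].
by rewrite orth_coef.
Qed.


Lemma span_comb t e (cf : nat -> C) : (forall k, (k < size e)%N -> spanN t e`_k) ->
  spanN t (\sum_(0 <= k < size e) cf k *: e`_k).
Proof.
move=> he; apply: subsp_sum; first exact: span_sub.
move=> k /andP[_ hk]; apply: subspZ; [exact: span_sub | exact: he].
Qed.

Lemma hnorm_real f : (hnorm ip f)^* = hnorm ip f.
Proof. by rewrite (hnormE ipP) conj_Creal // ger0_real // ler0c sqrtr_ge0. Qed.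

Lemma hnorm_sq f : ip f f = hnorm ip f ^+ 2.
Proof. by rewrite (hnormE ipP) -rmorphXn /= sqr_sqrtr ?(nr_ge0 ipP) // (ipxx ipP). Qed.

Lemma hnorm_neq0 f : f != 0 -> hnorm ip f != 0.
Proof.
move=> hf; apply/eqP => h0; move/eqP: hf; apply.
by apply: (ip_eq0 ipP); rewrite hnorm_sq h0 expr0n.
Qed.

Lemma ONB s : forall W, subsp W -> (forall x, W x -> spanN s x) ->
  exists e, [/\ forall k, (k < size e)%N -> W e`_k, orthon e & forall x, W x -> spanN e x].
Proof.
elim: s => [|a t IH] W hW hWs.
  by exists [::]; split => // k.
pose W' x := W x /\ spanN t x.
have hW' : subsp W'.
  split; first by split; [case: hW | case: (span_sub t)].
  move=> c x y [hx1 hx2] [hy1 hy2]; split; first by case: hW => _; apply.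
  by case: (span_sub t) => _; apply.
have [e' [We' on' sp']] := IH W' hW' (fun x hx => hx.2).
have [hall | ] := EM (forall x, W x -> spanN t x).
  exists e'; split => //; first by move=> k hk; exact: (We' k hk).1.
  by move=> x hx; exact: (sp' x (conj hx (hall x hx))).
move/existsNP => [w0]; move/not_implyP => [Ww0 nw0].
pose p := \sum_(0 <= k < size e') ip w0 e'`_k *: e'`_k.
pose f := w0 - p.
have sp_p : spanN t p by apply: span_comb => k hk; exact: (We' k hk).2.
have Wp : W p by apply: subsp_sum => // k /andP[_ hk]; apply: subspZ => //; exact: (We' k hk).1.
have Wf : W f by apply: subspB.
have fne : f != 0.
  apply/eqP => hf; apply: nw0; have -> : w0 = p by apply/eqP; rewrite -subr_eq0; apply/eqP.
  exact: sp_p.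
pose h := hnorm ip f.
have h0 : h != 0 by exact: hnorm_neq0.
pose eh := h^-1 *: f.
have hfp : forall j, (j < size e')%N -> ip f e'`_j = 0.
  by move=> j hj; rewrite /f (ipBl ipP) orth_coef // subrr.
have ehh : ip eh eh = 1.
  rewrite /eh (ipZl ipP) (ipZr ipP) hnorm_sq fmorphV /= hnorm_real -/h.
  by field.
have ehe : forall j, (j < size e')%N -> ip eh e'`_j = 0.
  by move=> j hj; rewrite /eh (ipZl ipP) hfp // mulr0.
exists (eh :: e'); split.
- case=> [|k] /=; first by move=> _; apply: subspZ.
  by rewrite ltnS => hk; exact: (We' k hk).1.
- case=> [|j] [|k] /=; rewrite ?ltnS.
  + by move=> _ _; rewrite ehh.
  + by move=> _ hk; rewrite ehe.
  + by move=> hj _; rewrite (ipC ipP) ehe // conjC0.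
  + by move=> hj hk; rewrite on' // eqSS.
move=> x Wx.
have [cx ex] := hWs x Wx; have [cw ew] := hWs w0 Ww0.
rewrite /= big_nat_recl //= in ex; rewrite /= big_nat_recl //= in ew.
pose beta := cw 0%N.
have bne : beta != 0.
  apply/eqP => hb; apply: nw0; rewrite ew -/beta hb scale0r add0r.
  by exists (fun k => cw k.+1).
pose g := cx 0%N / beta.
pose z := x - g *: w0.
have Wz : W z by apply: subspB => //; apply: subspZ.
have spz : spanN t z.
  exists (fun k => cx k.+1 - g * cw k.+1).
  rewrite /z ex ew scalerDr scalerA /g divfK // scaler_sumr.
  rewrite opprD addrACA subrr add0r -sumrB; apply: eq_bigr => k _.
  by rewrite scalerBl scalerA.
have [dz ez] := sp' z (conj Wz spz).
exists (fun k => if k is k'.+1 then dz k' + g * ip w0 e'`_k' else g * h).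
rewrite /= big_nat_recl //=.
have -> : x = z + g *: w0 by rewrite /z subrK.
rewrite ez.
have ew0 : w0 = f + p by rewrite /f subrK.
rewrite [in g *: w0]ew0 scalerDr /eh scalerA -mulrA mulfV // mulr1.
have -> : \sum_(0 <= k < size e') (dz k + g * ip w0 e'`_k) *: e'`_k =
    \sum_(0 <= k < size e') dz k *: e'`_k + g *: p.
  by rewrite /p scaler_sumr -big_split /=; apply: eq_bigr => k _; rewrite scalerDl scalerA.
by rewrite addrCA.
Qed.

End ONB.

End P5.
Import P5.

Module P6.

Section FD.
Variable R : realType.
Local Notation C := (R[i]).
Local Notation "x %:C" := (real_complex R x).
Variable H : lmodType C.
Variable ip : H -> H -> C.
Hypothesis ipP : inner_product ip.
Local Notation nr := (nr ip).

Lemma bessel1 u e : ip e e = 1 -> ip u e * (ip u e)^* <= ip u u.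
Proof.
move=> he; set b := ip u e.
have h : ip u u - b * b^* = ip (u + (- b) *: e) (u + (- b) *: e).
  by rewrite (ip_expand ipP) he (ipC ipP u e) -/b rmorphN /=; ring.
by rewrite -subr_ge0 h ip_ge0.
Qed.

Lemma bessel_norm u e : ip e e = 1 -> `|ip u e| <= hnorm ip u.
Proof.
move=> he; rewrite -ler_sqr ?nnegrE ?normr_ge0 //; last first.
  by rewrite (hnormE ipP) ler0c sqrtr_ge0.
by rewrite normCK -hnorm_sq // bessel1.
Qed.

Variable W : H -> Prop.
Variable s : seq H.
Variable T : {linear H -> H}.
Hypothesis hW : subsp W.
Hypothesis hWs : forall x, W x -> spanN s x.
Hypothesis hTW : forall x, W x -> W (T x).
Hypothesis hTinj : forall x, W x -> T x = 0 -> x = 0.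

Lemma FD : exists K : R, 0 <= K /\
  forall u, W u -> exists x, [/\ W x, T x = u & nr x <= K * nr u].
Proof.
have [e [We on sp]] := ONB ipP hW hWs.
pose d := size e.
pose vec (c : 'rV[C]_d) := \sum_(k < d) c 0 k *: e`_k.
have coef : forall (F : 'I_d -> C) (j : 'I_d), ip (\sum_(k < d) F k *: e`_k) e`_j = F j.
  move=> F j; rewrite (ipsuml ipP) (bigD1 j) //= (ipZl ipP) on // eqxx mulr1.
  rewrite big1 ?addr0 // => k hk; rewrite (ipZl ipP) on //.
  by move: hk; rewrite -val_eqE /= => /negbTE ->; rewrite mulr0.
have expand : forall x, W x -> x = \sum_(k < d) ip x e`_k *: e`_k.
  move=> x hx; rewrite -(big_mkord xpredT (fun k => ip x e`_k *: e`_k)).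
  exact: orth_expand (sp x hx).
have Wsum : forall F : 'I_d -> C, W (\sum_(k < d) F k *: e`_k).
  move=> F; apply: (big_rec (fun a => W a)); first by case: hW.
  move=> k a _ ha; apply: subspD => //; apply: subspZ => //; exact: We.
pose A : 'M[C]_d := \matrix_(k, j) ip (T e`_k) e`_j.
have Tvec : forall c, T (vec c) = vec (c *m A).
  move=> c; rewrite /vec linear_sum /=.
  under eq_bigr => k _ do rewrite linearZ /= [T e`_k](expand _ (hTW (We _ (ltn_ord k)))) scaler_sumr.
  rewrite exchange_big /=; apply: eq_bigr => j _.
  rewrite !mxE scaler_suml; apply: eq_bigr => k _.
  by rewrite scalerA !mxE.
have hA : A \in unitmx.
  rewrite -row_free_unit -kermx_eq0; apply/eqP/row_matrixP => i; rewrite row0.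
  set r := row i (kermx A).
  have rA : r *m A = 0 by rewrite /r -row_mul mulmx_ker row0.
  have vr : vec r = 0.
    apply: hTinj; first exact: Wsum.
    by rewrite Tvec rA /vec big1 // => k _; rewrite mxE scale0r.
  apply/rowP => j; rewrite mxE.
  have := coef (fun k => r 0 k) j; rewrite -/(vec r) vr (ip0l ipP) => h.
  by move: h; rewrite /r mxE => <-; rewrite [X in _ = X]mxE.
pose L (k : 'I_d) := \sum_(j < d) `|invmx A j k|.
have L0 : forall k, 0 <= L k by move=> k; apply: sumr_ge0 => j _; exact: normr_ge0.
pose KC := \sum_(k < d) L k ^+ 2.
have KC0 : 0 <= KC by apply: sumr_ge0 => k _; rewrite exprn_ge0.
exists (complex.Re KC); split.
  by rewrite -ler0c RRe_real ?ger0_real.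
move=> u Wu.
pose b : 'rV[C]_d := \row_j ip u e`_j.
pose c := b *m invmx A.
exists (vec c); split.
- exact: Wsum.
- rewrite Tvec mulmxKV // [RHS](expand u Wu); apply: eq_bigr => k _; by rewrite mxE.
- have hu0 : 0 <= hnorm ip u by rewrite (hnormE ipP) ler0c sqrtr_ge0.
  have hb : forall j, `|b 0 j| <= hnorm ip u.
    by move=> j; rewrite mxE bessel_norm // on // eqxx.
  have hc : forall k, `|c 0 k| <= hnorm ip u * L k.
    move=> k; rewrite mxE /L mulr_sumr; apply: (le_trans (ler_norm_sum _ _ _)).
    apply: ler_sum => j _.
    by rewrite normrM ler_wpM2r ?normr_ge0 ?hb.
  have ipx : ip (vec c) (vec c) = \sum_(k < d) c 0 k * (c 0 k)^*.
    rewrite {1}/vec (ipsuml ipP); apply: eq_bigr => k _.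
    by rewrite (ipZl ipP) (ipC ipP (vec c)) coef.
  have : ip (vec c) (vec c) <= ip u u * KC.
    rewrite ipx /KC mulr_sumr; apply: ler_sum => k _.
    rewrite -normCK hnorm_sq // -exprMn; apply: lerXn2r; rewrite ?nnegrE ?normr_ge0 ?hc //.
    by rewrite mulr_ge0.
  rewrite !(ipxx ipP) => h.
  by rewrite -lecR rmorphM /= (RRe_real (ger0_real KC0)) mulrC.
Qed.


End FD.

End P6.
Import P6.

Module P7.

Section Main.
Variable R : realType.
Local Notation C := (R[i]).
Local Notation "x %:C" := (real_complex R x).
Variable H : lmodType C.
Variable ip : H -> H -> C.
Hypothesis ipP : inner_product ip.
Local Notation nr := (nr ip).

Lemma unit_conj (t : C) : `|t| = 1 -> t * t^* = 1.
Proof. by move=> h; rewrite -normCK h expr1n. Qed.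

Lemma ip_eq0_all x : (forall w, ip w x = 0) -> x = 0.
Proof. by move=> h; apply: (ip_eq0 ipP); apply: h. Qed.

Lemma bounded_nr (T : {linear H -> H}) : bounded ip T ->
  exists B : R, 0 <= B /\ forall x, nr (T x) <= B * nr x.
Proof.
case=> M hM; exists (complex.Re M ^+ 2); split; first exact: sqr_ge0.
move=> x; have := hM x; rewrite !(hnormE ipP).
have [hx|hx] := eqVneq (nr x) 0.
  have x0 := nr_eq0 ipP hx; rewrite x0 linear0 (nr0 ipP) mulr0 => _; exact: lexx.
have sx : 0 < Num.sqrt (nr x) by rewrite sqrtr_gt0 lt_def hx nr_ge0.
move: M hM => [a b] _; rewrite lecE /= => /andP[_ h].
rewrite mulr0 subr0 in h.
have s0 := sqrtr_ge0 (nr (T x)).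
have : nr (T x) <= (a * Num.sqrt (nr x)) ^+ 2.
  rewrite -(sqr_sqrtr (nr_ge0 ipP (T x))); apply: lerXn2r; rewrite ?nnegrE //.
  exact: le_trans h.
by rewrite exprMn sqr_sqrtr ?(nr_ge0 ipP).
Qed.

End Main.

End P7.
Import P7.

Theorem lemma3p11 (R : realType) (H : lmodType R[i]) (ip : H -> H -> R[i])
    (n : nat) (z : 'I_n -> 'I_n -> R[i]) (V Vs : 'I_n -> {linear H -> H})
    (T : {linear H -> H}) (tau : 'I_n -> R[i]) :
  (0 < n)%N ->
  hilbert_space ip ->
  doubly_noncommuting ip z (fun i => V i : H -> H) (fun i => Vs i : H -> H) ->
  (forall i, pure_isometry ip (V i)) ->
  finite_dimensional (fun x => forall i, Vs i x = 0) ->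
  bounded ip T ->
  (forall i, `|tau i| = 1) ->
  (forall i x, T (V i x) = tau i *: V i (T x)) ->
  (forall i x, Vs i x = 0 -> Vs i (T x) = 0) ->
  (forall x, (forall i, Vs i x = 0) -> T x = 0 -> x = 0) ->
  forall y : H, exists x : H, T x = y.
Proof.
move=> n0 hH hdnc hpure hfd hbd htau hTV hTker hTinj.
have ipP : inner_product ip := hH.1.
case: hdnc => hz hzc hiso hadj hcomm.
have [B [B0 hB]] := bounded_nr ipP hbd.
pose W m x := forall i : 'I_n, (i < m)%N -> Vs i x = 0.
have VV : forall i j : 'I_n, i != j -> forall u, V j (V i u) = (z i j)^* *: V i (V j u).
  move=> i j hij u; set c := (z i j)^*.
  have hcc : c * c^* = 1 by rewrite /c conjCK mulrC unit_conj // hz.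
  set A := V j (V i u); set Bv := V i (V j u).
  have hAB : ip A Bv = c * ip u u.
    rewrite /Bv (ipC ipP) (hadj i) /A hcomm // (VsV ipP (hiso i) (hadj i)) -/c.
    rewrite (ipZr ipP) (ipV ipP (hiso j)) rmorphM /= conjCK.
    by rewrite (conj_Creal (ger0_real (ip_ge0 ipP u))).
  apply/eqP; rewrite -subr_eq0; apply/eqP; apply: (ip_eq0 ipP).
  have -> : A - c *: Bv = A + (- c) *: Bv by rewrite scaleNr.
  rewrite (ip_expand ipP) [ip Bv A](ipC ipP) hAB.
  rewrite /A /Bv !(ipV ipP (hiso _)) rmorphN rmorphM /= conjCK.
  rewrite (conj_Creal (ger0_real (ip_ge0 ipP u))).
  rewrite /c conjCK in hcc.
  have -> : ip u u + - z i j * (c * ip u u) + - c * (z i j * ip u u) +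
    - c * - z i j * ip u u = ip u u * (1 - c * z i j) by ring.
  by rewrite hcc subrr mulr0.
have neq_lt : forall (k i : 'I_n) m, (k < m)%N -> (m <= i)%N -> k != i.
  move=> k i m hk hmi; apply/eqP => e; move: hk; rewrite e => hk.
  by move: (leq_trans hk hmi); rewrite ltnn.
have SV : forall m (i : 'I_n), (m <= i)%N -> forall x, W m x -> W m (V i x).
  move=> m i hmi x hx k hk.
  by rewrite hcomm ?(neq_lt k i m) // hx // linear0 scaler0.
have SVs : forall m (i : 'I_n), (m <= i)%N -> forall x, W m x -> W m (Vs i x).
  move=> m i hmi x hx k hk.
  have hki := neq_lt k i m hk hmi.
  apply: (ip_eq0_all ipP) => w.
  by rewrite -(hadj k) -(hadj i) (VV k i hki) (ipZl ipP) (hadj k) hx // (ip0r ipP) mulr0.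
have S0 : forall m, W m 0 by move=> m k _; rewrite linear0.
have SZD : forall m c a b, W m a -> W m b -> W m (c *: a + b).
  by move=> m c a b ha hb k hk; rewrite linearD linearZ /= ha // hb // scaler0 addr0.
have Scl : forall m u l, (forall k, W m (u k)) -> conv ip u l -> W m l.
  move=> m u l hu hl k hk.
  have hVsB : forall x, nr ip (Vs k x) <= 1 * nr ip x.
    by move=> x; rewrite mul1r; exact: (nrVs_le ipP (hiso k) (hadj k)).
  have h1 := conv_map ipP (fun a b => linearB (Vs k) a b) ler01 hVsB hl.
  have h2 : conv ip (fun _ => 0) (Vs k l).
    by apply: (conv_ext (N0 := 0%N) _ h1) => m' _; rewrite hu.
  exact: (conv_uniq ipP h2 (conv_cst ipP 0)).
have Pn : exists K : R, 0 <= K /\ forall u, W n u ->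
    exists x, [/\ W n x, T x = u & nr ip x <= K * nr ip u].
  have [s hs] := hfd.
  have hW : subsp (fun x => forall i, Vs i x = 0).
    split; first by move=> i; rewrite linear0.
    by move=> c a b ha hb i; rewrite linearD linearZ /= ha hb scaler0 addr0.
  have hWs : forall x, (forall i, Vs i x = 0) -> spanN s x.
    by move=> x hx; have [c ->] := hs x hx; exists c; rewrite big_mkord.
  have hTW : forall x, (forall i, Vs i x = 0) -> forall i, Vs i (T x) = 0.
    by move=> x hx i; apply: hTker.
  have [K [K0 hK]] := FD ipP hW hWs hTW hTinj.
  exists K; split => // u hu.
  have [x [hx1 hx2 hx3]] := hK u (fun i => hu i (ltn_ord i)).
  by exists x; split => // i _; apply: hx1.
have P : forall j, (j <= n)%N -> exists K : R, 0 <= K /\ forall u, W (n - j)%N u ->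
    exists x, [/\ W (n - j)%N x, T x = u & nr ip x <= K * nr ip u].
  elim=> [|j IH] hj; first by rewrite subn0.
  have [K [K0 hK]] := IH (ltnW hj).
  have hm : (n - j.+1 < n)%N by rewrite ltn_subLR // addSn ltnS leq_addl.
  have hmj : (n - j)%N = (n - j.+1).+1 by rewrite subnSK.
  rewrite hmj in hK.
  set m := (n - j.+1)%N in hm hK *.
  pose im := Ordinal hm.
  exists (2 * K); split; first by rewrite mulr_ge0.
  move=> y hy.
  apply: (step ipP hH (hiso im) (hadj im) (hpure im) B0 hB (unit_conj (htau im))
     (hTV im) (S0 m) (SZD m) (Scl m) (SV m im (leqnn m)) (SVs m im (leqnn m)) K0 _ hy).
  move=> u hu hVu.
  have hu' : W m.+1 u.
    move=> i; rewrite ltnS leq_eqVlt => /orP[/eqP hi | hi]; last exact: hu.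
    by have -> : i = im by apply: val_inj.
  have [x [hx1 hx2 hx3]] := hK u hu'.
  exists x; split => //.
  - by move=> i hi; apply: hx1; rewrite ltnS ltnW.
  - exact: hx1.
have [K [_ hK]] := P n (leqnn n).
move=> y; rewrite subnn in hK.
by have [x [_ hx _]] := hK y (fun i hi => False_ind _ (notF hi)); exists x.
Qed.
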